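(* Let $U$ be an open subset of $\mathbb{R}^n$ with the Euclidean metric $d$, and let $C\subset\mathbb{R}^n$ be a metric coordinatizing set for $U$ with respect to $d$. Let $\phi:(t_1,t_2)\to U$ be a continuous curve and $t\in(t_1,t_2)$ with $\phi(t)\notin C$. Then $\phi$ is differentiable at $t$ (in the usual sense) if and only if $\phi$ is metric-coordinate-wise differentiable at $t$, i.e. for every $c\in C$ the function $s\mapsto\phi_c(s):=d(\phi(s),c)$ is differentiable at $s=t$.
   Context: A set $C\subset\mathbb{R}^n$ is a metric coordinatizing set for $U\subset\mathbb{R}^n$ if for all $x,y\in U$ with $x\neq y$ there is $c\in C$ with $d(x,c)\neq d(y,c)$. *)

(* Defs.v *)
From HB Require Import structures.
From mathcomp Require Import all_boot all_order all_algebra.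
From mathcomp Require Import all_classical all_reals all_analysis.
Set Implicit Arguments. Unset Strict Implicit. Unset Printing Implicit Defensive.
Import Order.TTheory GRing.Theory Num.Theory.
Import numFieldNormedType.Exports.
Local Open Scope classical_set_scope.
Local Open Scope ring_scope.

Definition euclid_dist (R : realType) (n : nat) (x y : 'rV[R]_n) : R :=
  Num.sqrt (\sum_(i < n) (x ord0 i - y ord0 i) ^+ 2).

Definition metric_coordinatizing (R : realType) (n : nat)
  (C U : set 'rV[R]_n) : Prop :=
  forall x y, U x -> U y -> x <> y ->
    exists c, C c /\ euclid_dist x c <> euclid_dist y c.

(* Main.v *)
Require Import Defs.
From HB Require Import structures.
From mathcomp Require Import all_boot all_order all_algebra.
From mathcomp Require Import all_classical all_reals all_analysis.
From mathcomp Require Import ring lra zify.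
Import Order.TTheory GRing.Theory Num.Theory.
Import numFieldNormedType.Exports.
Local Open Scope classical_set_scope.
Local Open Scope ring_scope.
Section S.
Variable R : realType.

Lemma cont_at_itv (n : nat) (t1 t2 t : R) (phi : R -> 'rV[R]_n) :
  {within `]t1, t2[, continuous phi} -> t1 < t < t2 -> {for t, continuous phi}.
Proof.
move=> Hc tt.
have ti : [set` `]t1, t2[] t by rewrite /= in_itv /=.
have op : open [set` `]t1, t2[] by apply: interval_open.
have := Hc t; rewrite /continuous_at -nbhs_subspace_interior //.
exact: op.
Qed.

Lemma sqrt_comp_derivable (g : R -> R) t : derivable g t 1 -> 0 < g t ->
  derivable (fun s => Num.sqrt (g s)) t 1.
Proof.
move=> dg g0.
have H1 := is_derive1_sqrt g0.
have H2 := derivableP dg.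
exact: (@ex_derive _ _ _ _ _ _ _ (is_derive1_comp H1 H2)).
Qed.

Lemma sq_derivable (h : R -> R) t : {for t, continuous h} -> h t != 0 ->
  derivable (fun s => h s ^+ 2) t 1 -> derivable h t 1.
Proof.
wlog hp : h / 0 < h t.
  move=> W hc h0 dh; have [hn|hp|hz] := ltgtP (h t) 0; last first.
  - by rewrite hz eqxx in h0.
  - exact: W.
  have dn : derivable (fun s => - h s) t 1.
    apply: W.
    + by rewrite oppr_gt0.
    + exact: continuousN.
    + by rewrite oppr_eq0.
    + by under eq_fun do rewrite sqrrN.
  have -> : h = (fun s => - - h s) by apply: funext => s; rewrite opprK.
  exact: derivableN dn.
move=> hc _ dh.
apply: (@near_eq_derivable _ _ _ (fun s => Num.sqrt (h s ^+ 2)) h)...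
  have hn := cvgr_gt _ hc _ hp.
  near=> s; rewrite sqrtr_sqr gtr0_norm //.
  near: s; exact: hn.
by apply: sqrt_comp_derivable => //; rewrite exprn_gt0.
Unshelve. all: by end_near. Qed.
End S.
Section L.
Variables (R : realType) (n : nat).
Implicit Types u v x c : 'rV[R]_n.

Definition dot u x : R := (u *m x^T) 0 0.

Lemma dotE u x : dot u x = \sum_i u 0 i * x 0 i.
Proof. by rewrite /dot !mxE; apply: eq_bigr => i _; rewrite mxE. Qed.

Lemma dotC u x : dot u x = dot x u.
Proof. by rewrite !dotE; apply: eq_bigr => i _; rewrite mulrC. Qed.

Lemma dotDl u v x : dot (u + v) x = dot u x + dot v x.
Proof. by rewrite /dot mulmxDl mxE. Qed.

Lemma dotZl a u x : dot (a *: u) x = a * dot u x.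
Proof. by rewrite /dot -scalemxAl mxE. Qed.

Lemma dotNl u x : dot (- u) x = - dot u x.
Proof. by rewrite -scaleN1r dotZl mulN1r. Qed.

Lemma dotBl u v x : dot (u - v) x = dot u x - dot v x.
Proof. by rewrite dotDl dotNl. Qed.

Lemma dotDr u v x : dot x (u + v) = dot x u + dot x v.
Proof. by rewrite dotC dotDl -!(dotC x). Qed.

Lemma dotZr a u x : dot x (a *: u) = a * dot x u.
Proof. by rewrite dotC dotZl dotC. Qed.

Lemma dotBr u v x : dot x (u - v) = dot x u - dot x v.
Proof. by rewrite dotC dotBl -!(dotC x). Qed.

Lemma dotNr u x : dot x (- u) = - dot x u.
Proof. by rewrite dotC dotNl dotC. Qed.

Lemma dot_delta i x : dot (delta_mx 0 i) x = x 0 i.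
Proof. by rewrite /dot -rowE !mxE. Qed.

Lemma dot_ge0 u : 0 <= dot u u.
Proof. by rewrite dotE sumr_ge0 // => i _; rewrite -expr2 sqr_ge0. Qed.

Lemma dot_eq0 u : dot u u = 0 -> u = 0.
Proof.
rewrite dotE => /eqP; rewrite psumr_eq0 => [/allP H|i _]; last by rewrite -expr2 sqr_ge0.
apply/rowP => i; rewrite mxE.
have := H i (mem_index_enum i); rewrite /= -expr2 sqrf_eq0.
by move/eqP.
Qed.

Lemma distE x c : euclid_dist x c = Num.sqrt (dot (x - c) (x - c)).
Proof.
rewrite /euclid_dist dotE; congr Num.sqrt.
by apply: eq_bigr => i _; rewrite !mxE expr2.
Qed.

Lemma dist_sq x c : euclid_dist x c ^+ 2 = dot (x - c) (x - c).
Proof. by rewrite distE sqr_sqrtr // dot_ge0. Qed.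


Lemma refl_contra (U C : set 'rV[R]_n) u x0 : open U -> metric_coordinatizing C U ->
  U x0 -> u != 0 -> (forall c, C c -> dot u (x0 - c) = 0) -> False.
Proof.
move=> oU mc Ux0 u0 Hc.
have : nbhs x0 U by apply: open_nbhs_nbhs; split.
move=> /nbhs_ballP [e e0 be].
have N0 : 0 < `|u| by rewrite normr_gt0.
pose d := e / (2 * `|u|).
have d0 : 0 < d by rewrite divr_gt0 // mulr_gt0.
have dn : `|d *: u| < e.
  rewrite normrZ gtr0_norm // /d invfM mulrA divfK ?gt_eqF //.
  by rewrite ltr_pdivrMr // ltr_pMr // ltr1n.
have U1 : U (x0 + d *: u).
  by apply: be; rewrite -ball_normE /ball_ /= opprD addNKr normrN.
have U2 : U (x0 - d *: u).
  by apply: be; rewrite -ball_normE /ball_ /= opprB addrC subrK.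
have neq : x0 + d *: u <> x0 - d *: u.
  move/(congr1 (fun y => y - x0)); rewrite !(addrC x0) !addrK => /eqP.
  rewrite -addr_eq0 -scalerDl scaler_eq0 (negbTE u0) orbF.
  by rewrite -mulr2n mulrn_eq0 /= (gt_eqF d0).
have [c [Cc]] := mc _ _ U1 U2 neq; apply.
rewrite !distE; congr Num.sqrt.
rewrite (addrAC x0 (d *: u)) (addrAC x0 (- (d *: u))).
have := Hc c Cc; move: (x0 - c) => w H.
rewrite !(dotDl, dotBl, dotDr, dotBr, dotZl, dotZr, dotNl, dotNr) (dotC w u) H.
ring.
Qed.


Lemma coord_le (x : 'rV[R]_n) i : `|x 0 i| <= `|x|.
Proof.
rewrite [leRHS]/Num.Def.normr/= mx_normrE.
by apply: le_trans; last exact: (le_bigmax _ _ (0, i)).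
Qed.

Lemma dot_cont (f : R -> 'rV[R]_n) t u : {for t, continuous f} ->
  {for t, continuous (fun s => dot u (f s))}.
Proof.
move=> fc.
have cc : forall i, {for t, continuous (fun s => f s 0 i)}.
  move=> i; apply/cvgrPdist_lt => e e0.
  have hn := (cvgrPdist_lt _ _).1 fc e e0.
  near=> s.
  have hs : `|f t - f s| < e by near: s; exact: hn.
  apply: le_lt_trans hs.
  by have := coord_le (f t - f s) i; rewrite !mxE.
have E : (fun s => dot u (f s)) = (fun s => \sum_i u 0 i * f s 0 i).
  by apply: funext => s; rewrite dotE.
rewrite /prop_for /continuous_at E dotE.
apply: cvg_big => //; first exact: add_continuous.
move=> i _; apply: cvgM; first exact: cvg_cst.
exact: cc.
Unshelve. all: by end_near. Qed.

Lemma dot0l x : dot 0 x = 0.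
Proof. by rewrite /dot mul0mx mxE. Qed.

Lemma span_exists (P : 'rV[R]_n -> Prop) : P 0 ->
  (forall a v w, P v -> P w -> P (a *: v + w)) ->
  exists M : 'M[R]_n, (forall v, (v <= M)%MS -> P v) /\ (forall v, P v -> (v <= M)%MS).
Proof.
move=> P0 Pl.
suff: forall k, exists M : 'M[R]_n, (forall v, (v <= M)%MS -> P v) /\
   ((k <= \rank M)%N \/ forall v, P v -> (v <= M)%MS).
  move=> /(_ n.+1) [M [H1 [H2|H2]]]; last by exists M.
  by have := rank_leq_col M; rewrite leqNgt H2.
elim=> [|k [M [H1 [H2|H2]]]].
- exists 0; split; last by left.
  by move=> v; rewrite submx0 => /eqP ->.
- have [all|] := pselect (forall v, P v -> (v <= M)%MS).
    by exists M; split => //; right.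
  move=> /existsNP [w /not_implyP [Pw wM]].
  exists (M + w)%MS; split.
  + move=> v /sub_addsmxP [[a b] /= ->].
    rewrite (mx11_scalar b) mul_scalar_mx addrC.
    by apply: Pl => //; apply: H1; exact: submxMl.
  + left.
    have lt : (M < M + w)%MS.
      rewrite ltmxEneq addsmxSl /=; apply/negP => H.
      by apply: wM; exact: submx_trans (addsmxSr M w) H.
    exact: leq_ltn_trans H2 (rank_ltmx lt).
- by exists M; split => //; right.
Qed.

Lemma dvD (f g : R -> R) t : derivable f t 1 -> derivable g t 1 ->
  derivable (fun s => f s + g s) t 1.
Proof. exact: derivableD. Qed.

Lemma dvB (f g : R -> R) t : derivable f t 1 -> derivable g t 1 ->
  derivable (fun s => f s - g s) t 1.
Proof. exact: derivableB. Qed.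

Lemma dvM (f g : R -> R) t : derivable f t 1 -> derivable g t 1 ->
  derivable (fun s => f s * g s) t 1.
Proof. exact: derivableM. Qed.

Lemma dvC (k t : R) : derivable (fun _ : R => k) t 1.
Proof. exact: derivable_cst. Qed.

Lemma dvsum m (f : 'I_m -> R -> R) t : (forall i, derivable (f i) t 1) ->
  derivable (fun s => \sum_i f i s) t 1.
Proof. by move=> H; rewrite -fct_sumE; exact: derivable_sum. Qed.

Lemma nzv (A : 'M[R]_n) : A != 0 -> exists2 u : 'rV[R]_n, (u <= A)%MS & u != 0.
Proof.
move=> A0; case: (pselect (exists i, row i A != 0)) => [[i Ai]|N].
  by exists (row i A) => //; exact: row_sub.
case/eqP: A0; apply/row_matrixP => i; rewrite row0.
by apply/eqP/negPn/negP => Hi; apply: N; exists i.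
Qed.

Lemma backward (U C : set 'rV[R]_n) (phi : R -> 'rV[R]_n) t :
  open U -> metric_coordinatizing C U -> U (phi t) -> {for t, continuous phi} ->
  (forall c, C c -> derivable (fun s => euclid_dist (phi s) c) t 1) ->
  derivable phi t 1.
Proof.
move=> oU mc Ut pc H.
pose W v := derivable (fun s => dot v (phi s)) t 1.
suff HW : forall v, W v.
  apply/derivable_mxP => i j; rewrite (ord1 i).
  have := HW (delta_mx 0 j); rewrite /W.
  by under eq_fun do rewrite dot_delta.
have W0 : W 0 by rewrite /W; under eq_fun do rewrite dot0l; exact: derivable_cst.
have Wl : forall a v w, W v -> W w -> W (a *: v + w).
  move=> a v w Wv Ww; rewrite /W; under eq_fun do rewrite dotDl dotZl.
  by apply: dvD => //; apply: dvM => //; exact: dvC.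
have [[c0 Cc0]|nC] := pselect (exists c, C c); last first.
  move=> v; have [->|v0] := eqVneq v 0; first exact: W0.
  by exfalso; apply: (@refl_contra U C v (phi t) oU mc Ut v0) => c Cc; case: nC; exists c.
have Sq : forall c, C c -> derivable (fun s => dot (phi s - c) (phi s - c)) t 1.
  move=> c Cc.
  have -> : (fun s => dot (phi s - c) (phi s - c)) =
     (fun s => euclid_dist (phi s) c * euclid_dist (phi s) c).
    by apply: funext => s; rewrite -expr2 dist_sq.
  exact: (@dvM _ _ t (H c Cc) (H c Cc)).
have WC : forall c, C c -> W (c - c0).
  move=> c Cc; rewrite /W.
  have E : forall x, dot (c - c0) x = (dot (x - c0) (x - c0) - dot (x - c) (x - c)
      + (dot c c - dot c0 c0)) * 2^-1.
    move=> x; rewrite !(dotBl, dotBr) (dotC c x) (dotC c0 x); field.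
    by [].
  have -> : (fun s => dot (c - c0) (phi s)) = (fun s =>
    (dot (phi s - c0) (phi s - c0) - dot (phi s - c) (phi s - c)
      + (dot c c - dot c0 c0)) * 2^-1) by apply: funext => s; exact: E.
  apply: dvM; last exact: dvC.
  apply: dvD; last exact: dvC.
  by apply: dvB; exact: Sq.
have [M [MW WM]] := @span_exists W W0 Wl.
pose K := kermx M^T.
have orth : forall u v, (u <= K)%MS -> (v <= M)%MS -> dot u v = 0.
  move=> u v /sub_kermxP uK /submxP [D ->].
  by rewrite /dot trmx_mul mulmxA uK mul0mx mxE.
have KC : forall u c, (u <= K)%MS -> C c -> dot u (c - c0) = 0.
  by move=> u c uK Cc; apply: orth uK (WM _ (WC c Cc)).
pose z := phi t - c0.
have Key1 : forall u, (u <= K)%MS -> u != 0 -> dot u z != 0.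
  move=> u uK u0; apply/eqP => Hz.
  apply: (@refl_contra U C u (phi t) oU mc Ut u0) => c Cc.
  have -> : phi t - c = z - (c - c0) by rewrite /z opprB addrA subrK.
  by rewrite dotBr Hz KC // subrr.
have DO : forall v, v *m K^T = 0 -> W v.
  move=> v vK; apply: MW.
  have MK : (M <= kermx K^T)%MS.
    by apply/sub_kermxP; rewrite -[M in M *m _]trmxK -trmx_mul mulmx_ker trmx0.
  have rk : \rank (kermx K^T) = \rank M.
    rewrite mxrank_ker mxrank_tr /K mxrank_ker mxrank_tr subKn //; exact: rank_leq_col.
  have := (mxrank_leqif_eq MK).2; rewrite rk eqxx => /esym /andP [_ E].
  by apply: submx_trans E; exact/sub_kermxP.
have rK : (\rank K <= 1)%N.
  rewrite leqNgt; apply/negP => r2.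
  pose Z := kermx z^T.
  have rZ : (n - 1 <= \rank Z)%N by rewrite /Z mxrank_ker leq_sub2l // rank_leq_col.
  have h1 := mxrank_sum_cap K Z.
  have h2 := rank_leq_col (K + Z)%MS.
  have : (0 < \rank (K :&: Z))%N by lia.
  rewrite lt0n mxrank_eq0 => /nzv [u uKZ u0].
  move: uKZ; rewrite sub_capmx => /andP [uK /sub_kermxP uZ].
  by have := Key1 u uK u0; rewrite /dot uZ mxE eqxx.
have : (\rank K == 0)%N || (\rank K == 1)%N by lia.
case/orP => [|/eqP rK1].
  rewrite mxrank_eq0 => /eqP K0.
  by move=> v; apply: DO; rewrite K0 trmx0 mulmx0.
have K0 : K != 0 by rewrite -mxrank_eq0 rK1.
have [u uK u0] := @nzv K K0.
have Ku : (K <= u)%MS.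
  have := (mxrank_leqif_eq uK).2; rewrite rank_rV u0 rK1 eqxx.
  by move=> /esym /andP [_ E].
have [D KD] := submxP Ku.
have PV : forall v, dot v u = 0 -> W v.
  move=> v vu; apply: DO; rewrite KD trmx_mul mulmxA.
  have -> : v *m u^T = 0.
    by apply/matrixP => i j; rewrite (ord1 i) (ord1 j) [RHS]mxE; exact: vu.
  by rewrite mul0mx.
have N0 : dot u u != 0.
  by apply/eqP => /dot_eq0 /eqP; rewrite (negbTE u0).
have Wu : W u.
  pose N := dot u u.
  pose h s := dot u (phi s - c0).
  suff dh : derivable h t 1.
    rewrite /W; have -> : (fun s => dot u (phi s)) = (fun s => h s + dot u c0).
      by apply: funext => s; rewrite /h dotBr subrK.
    by apply: dvD => //; exact: dvC.
  pose p i := delta_mx 0 i - (u 0 i / N) *: u.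
  have Wp : forall i, W (p i).
    by move=> i; apply: PV; rewrite dotBl dot_delta dotZl divfK // subrr.
  have E : forall y : 'rV[R]_n, dot u y ^+ 2 = N * (dot y y - \sum_i dot (p i) y ^+ 2).
    move=> y.
    have Ep : forall i, dot (p i) y = y 0 i - u 0 i / N * dot u y.
      by move=> i; rewrite dotBl dot_delta dotZl.
    under eq_bigr do rewrite Ep.
    rewrite (eq_bigr (fun i => y 0 i * y 0 i - 2 * (dot u y / N) * (u 0 i * y 0 i)
       + (dot u y / N) ^+ 2 * (u 0 i * u 0 i))); last by move=> i _; ring.
    rewrite big_split sumrB /= -!mulr_sumr -!dotE.
    move: N0; rewrite /N; move: (dot u y) (dot y y) (dot u u) => a b nn nn0.
    by field.
  apply: sq_derivable.
  - apply: dot_cont; rewrite /prop_for /continuous_at.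
    by apply: cvgB => //; exact: cvg_cst.
  - exact: Key1.
  - have -> : (fun s => h s ^+ 2) = (fun s => N * (dot (phi s - c0) (phi s - c0)
        - \sum_i (dot (p i) (phi s) - dot (p i) c0) * (dot (p i) (phi s) - dot (p i) c0))).
      apply: funext => s; rewrite /h E; congr (_ * (_ - _)).
      by apply: eq_bigr => i _; rewrite expr2 dotBr.
    apply: dvM; first exact: dvC.
    apply: dvB; first exact: Sq c0 Cc0.
    apply: dvsum => i.
    by apply: dvM; apply: dvB; [exact: Wp | exact: dvC | exact: Wp | exact: dvC].
move=> v.
pose a := dot v u / dot u u.
have -> : v = a *: u + (v - a *: u) by rewrite addrC subrK.
apply: Wl => //; apply: PV.
by rewrite dotBl dotZl /a divfK // subrr.
Qed.

End L.
Arguments dot {R n}.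

Theorem theorem4p1 (R : realType) (n : nat) (U C : set 'rV[R]_n)
  (t1 t2 : R) (phi : R -> 'rV[R]_n) (t : R) :
  open U ->
  metric_coordinatizing C U ->
  (forall s, t1 < s < t2 -> U (phi s)) ->
  {within `]t1, t2[, continuous phi} ->
  t1 < t < t2 ->
  ~ C (phi t) ->
  (derivable phi t 1 <->
   forall c, C c -> derivable (fun s => euclid_dist (phi s) c) t 1).
Proof.
move=> oU mc Uphi pc tt nC.
have pct := @cont_at_itv _ _ _ _ _ _ pc tt.
have Ut : U (phi t) := Uphi t tt.
split; last first.
  by move=> H; apply: (@backward _ _ U C phi t oU mc Ut pct H).
move=> dp c Cc.
have -> : (fun s => euclid_dist (phi s) c) =
    (fun s => Num.sqrt (dot (phi s - c) (phi s - c))).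
  by apply: funext => s; rewrite distE.
apply: sqrt_comp_derivable.
  have -> : (fun s => dot (phi s - c) (phi s - c)) =
      (fun s => \sum_i (phi s 0 i - c 0 i) * (phi s 0 i - c 0 i)).
    by apply: funext => s; rewrite dotE; apply: eq_bigr => i _; rewrite !mxE.
  apply: dvsum => i.
  move/derivable_mxP: dp => /(_ 0 i) di.
  by apply: dvM; apply: dvB; [exact: di | exact: dvC | exact: di | exact: dvC].
have z0 : phi t - c != 0.
  by rewrite subr_eq0; apply/eqP => E; apply: nC; rewrite E.
rewrite lt_neqAle dot_ge0 andbT eq_sym; apply/negP => /eqP /dot_eq0 /eqP.
exact/negP.
Qed.
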